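(* Let $\alpha,\beta$ be sets, $z\in\beta$, $\mathit{seq}:\beta\times\alpha\to\beta$ and $\mathit{comb}:\beta\times\beta\to\beta$, and write $x\oplus y$ for $\mathit{comb}(x,y)$. Let $\Gamma=\{\mathrm{foldl}(\mathit{seq},z,L) : L \text{ a finite list over }\alpha\}$. Then calls $\mathrm{aggregate}(z,\mathit{seq},\mathit{comb},\mathit{rdd})$ have deterministic outcomes if and only if both of the following hold: (1) $(\Gamma,\oplus,z)$ is a commutative monoid, i.e. $\oplus$ maps $\Gamma\times\Gamma$ into $\Gamma$, is associative and commutative on $\Gamma$, and $z$ is an identity for $\oplus$ on $\Gamma$; (2) for all finite lists $p_1,p_2$ over $\alpha$, $\mathrm{foldl}(\mathit{seq},z,p_1 \mathbin{+\!\!+} p_2)=\mathrm{foldl}(\mathit{seq},z,p_1)\oplus\mathrm{foldl}(\mathit{seq},z,p_2)$.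
   Context: Lists are finite; $\mathbin{+\!\!+}$ is list concatenation and $\mathrm{concat}$ concatenates a list of lists. For $f:B\times A\to B$, $b\in B$: $\mathrm{foldl}(f,b,[\,])=b$ and $\mathrm{foldl}(f,b,[x_1,\dots,x_n])=f(\cdots f(f(b,x_1),x_2)\cdots,x_n)$. An RDD over $\alpha$ is a list of lists over $\alpha$ (its ''partitions''). A partitioning is a function $P$ sending each list $L$ over $\alpha$ to an RDD obtained by splitting $L$ into consecutive (possibly empty) pieces $p_1,\dots,p_n$ with $p_1\mathbin{+\!\!+}\cdots\mathbin{+\!\!+}p_n=L$ and then arbitrarily permuting the list $[p_1,\dots,p_n]$. Define $\mathrm{aggregate}_{\mathrm{det}}(z,\mathit{seq},\mathit{comb},\mathit{rdd})=\mathrm{foldl}(\mathit{comb},z,[\mathrm{foldl}(\mathit{seq},z,q_1),\dots,\mathrm{foldl}(\mathit{seq},z,q_m)])$ for $\mathit{rdd}=[q_1,\dots,q_m]$. Calls $\mathrm{aggregate}(z,\mathit{seq},\mathit{comb},\mathit{rdd})$ are said to have deterministic outcomes if $\mathrm{aggregate}_{\mathrm{det}}(z,\mathit{seq},\mathit{comb},P(L))=\mathrm{foldl}(\mathit{seq},z,L)$ for all lists $L$ over $\alpha$ and all partitionings $P$. *)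

(* Defs.v *)
From Stdlib Require Import List Permutation.
Import ListNotations.

Definition foldl {A B : Type} (f : B -> A -> B) (b : B) (l : list A) : B :=
  fold_left f l b.

(* An RDD over alpha is a list of lists (its partitions). *)
Definition RDD (A : Type) : Type := list (list A).

(* P is a partitioning: for every list L, P L is obtained by splitting L into
   consecutive (possibly empty) pieces p_1..p_n with p_1 ++ ... ++ p_n = L,
   and then arbitrarily permuting the list [p_1; ...; p_n]. *)
Definition is_partitioning {A : Type} (P : list A -> RDD A) : Prop :=
  forall L : list A, exists pieces : list (list A),
    concat pieces = L /\ Permutation pieces (P L).

Definition aggregate_det {A B : Type} (z : B) (sq : B -> A -> B)
  (comb : B -> B -> B) (rdd : RDD A) : B :=
  foldl comb z (map (foldl sq z) rdd).

Definition deterministic_outcomes {A B : Type} (z : B) (sq : B -> A -> B)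
  (comb : B -> B -> B) : Prop :=
  forall P : list A -> RDD A, is_partitioning P ->
    forall L : list A, aggregate_det z sq comb (P L) = foldl sq z L.

Definition Gamma {A B : Type} (z : B) (sq : B -> A -> B) (b : B) : Prop :=
  exists L : list A, b = foldl sq z L.

Definition comm_monoid_on {B : Type} (G : B -> Prop) (comb : B -> B -> B) (z : B) : Prop :=
  (forall x y, G x -> G y -> G (comb x y)) /\
  (forall x y w, G x -> G y -> G w -> comb (comb x y) w = comb x (comb y w)) /\
  (forall x y, G x -> G y -> comb x y = comb y x) /\
  (forall x, G x -> comb z x = x /\ comb x z = x).

(* Main.v *)
Require Import Defs.
From Stdlib Require Import List Permutation.
Import ListNotations.

Section S.
Variables (A B : Type) (z : B) (sq : B -> A -> B) (comb : B -> B -> B).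
Local Notation f := (foldl sq z).

Lemma G_f (L : list A) : Gamma z sq (f L).
Proof. exists L; reflexivity. Qed.

Lemma fold_map_concat
  (Hm : comm_monoid_on (Gamma z sq) comb z)
  (H2 : forall p1 p2 : list A, f (p1 ++ p2) = comb (f p1) (f p2)) :
  forall (l : list (list A)) b, Gamma z sq b ->
    fold_left comb (map f l) b = comb b (f (concat l)).
Proof.
  destruct Hm as [Hc [Ha [Hcm Hid]]].
  induction l as [|x l IH]; intros b Hb; simpl.
  - destruct (Hid b Hb) as [_ E]. exact (eq_sym E).
  - rewrite IH by (apply Hc; [exact Hb| apply G_f]).
    rewrite Ha by (auto using G_f). rewrite H2. reflexivity.
Qed.

Lemma perm_concat
  (Hm : comm_monoid_on (Gamma z sq) comb z)
  (H2 : forall p1 p2 : list A, f (p1 ++ p2) = comb (f p1) (f p2)) :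
  forall l1 l2 : list (list A), Permutation l1 l2 -> f (concat l1) = f (concat l2).
Proof.
  destruct Hm as [Hc [Ha [Hcm Hid]]].
  induction 1; simpl.
  - reflexivity.
  - rewrite !H2, IHPermutation. reflexivity.
  - rewrite !H2. rewrite <- !Ha by apply G_f. rewrite (Hcm (f y)) by apply G_f.
    reflexivity.
  - congruence.
Qed.
End S.

Theorem lemma1 (A B : Type) (z : B) (sq : B -> A -> B) (comb : B -> B -> B) :
  deterministic_outcomes z sq comb <->
  (comm_monoid_on (Gamma z sq) comb z /\
   (forall p1 p2 : list A,
      foldl sq z (p1 ++ p2) = comb (foldl sq z p1) (foldl sq z p2))).
Proof.
  split.
  - intro D.
    assert (L1 : forall L, comb z (foldl sq z L) = foldl sq z L).
    { intro L. specialize (D (fun L => [L])).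
      refine (D _ L). intro L'. exists [L']. split; [simpl; apply app_nil_r | apply Permutation_refl]. }
    assert (R1 : forall L, comb (foldl sq z L) z = foldl sq z L).
    { intro L. specialize (D (fun L => [L; []])).
      assert (E := D ltac:(intro L'; exists [L'; []]; split; [simpl; rewrite !app_nil_r; reflexivity | apply Permutation_refl]) L).
      unfold aggregate_det, foldl in E. simpl in E. unfold foldl in L1. rewrite L1 in E. exact E. }
    assert (S2 : forall p1 p2, foldl sq z (p1 ++ p2) = comb (foldl sq z p1) (foldl sq z p2)).
    { intros p1 p2. specialize (D (fun L => [firstn (length p1) L; skipn (length p1) L])).
      assert (E := D ltac:(intro L'; exists [firstn (length p1) L'; skipn (length p1) L']; split; [simpl; rewrite app_nil_r; apply firstn_skipn | apply Permutation_refl]) (p1 ++ p2)).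
      unfold aggregate_det in E. simpl in E.
      rewrite firstn_app, skipn_app, firstn_all, skipn_all, PeanoNat.Nat.sub_diag in E. simpl in E. rewrite app_nil_r in E.
      unfold foldl in *. simpl in E. rewrite L1 in E. auto. }
    assert (C2 : forall p1 p2, foldl sq z (p1 ++ p2) = comb (foldl sq z p2) (foldl sq z p1)).
    { intros p1 p2. specialize (D (fun L => [skipn (length p1) L; firstn (length p1) L])).
      assert (E := D ltac:(intro L'; exists [firstn (length p1) L'; skipn (length p1) L']; split; [simpl; rewrite app_nil_r; apply firstn_skipn | apply perm_swap]) (p1 ++ p2)).
      unfold aggregate_det in E. simpl in E.
      rewrite firstn_app, skipn_app, firstn_all, skipn_all, PeanoNat.Nat.sub_diag in E. simpl in E. rewrite app_nil_r in E.
      unfold foldl in *. simpl in E. rewrite L1 in E. auto. }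
    split; [|exact S2].
    split; [|split; [|split]].
    + intros x y [p Hp] [q Hq]; subst. exists (p ++ q). auto.
    + intros x y w [p Hp] [q Hq] [r Hr]; subst.
      rewrite <- !S2. rewrite app_assoc. reflexivity.
    + intros x y [p Hp] [q Hq]; subst. rewrite <- S2, <- C2. reflexivity.
    + intros x [p Hp]; subst. auto.
  - intros [Hm H2] P HP L.
    destruct (HP L) as [pieces [Hc Hperm]].
    unfold aggregate_det, foldl at 1.
    rewrite (fold_map_concat A B z sq comb Hm H2 (P L) z) by (exists []; reflexivity).
    destruct Hm as [Hcl [Ha [Hcm Hid]]].
    rewrite (proj1 (Hid _ (G_f A B z sq _))).
    rewrite <- (perm_concat A B z sq comb (conj Hcl (conj Ha (conj Hcm Hid))) H2 _ _ Hperm).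
    rewrite Hc. reflexivity.
Qed.
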